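(* Let $\mathcal{A}$ and $\mathcal{B}$ be monoidal categories (not necessarily strict). Then $\mathcal{A}$ and $\mathcal{B}$ are monoidally equivalent if and only if there exist a monoidal category $\mathcal{C}$ and strict monoidal functors $P\colon \mathcal{C}\to\mathcal{A}$ and $Q\colon\mathcal{C}\to\mathcal{B}$ each of which is a surjective equivalence.
   Context: Monoidal categories $\mathcal{A},\mathcal{B}$ are monoidally equivalent if there exist strong monoidal functors $F\colon\mathcal{A}\to\mathcal{B}$, $G\colon\mathcal{B}\to\mathcal{A}$ and monoidal natural isomorphisms $1_{\mathcal{A}}\cong GF$ and $FG\cong 1_{\mathcal{B}}$. A strict monoidal functor is a monoidal functor whose coherence maps are identities, so that e.g. $P(c\otimes c') = P(c)\otimes P(c')$ and $P(I)=I$ as objects (the monoidal categories themselves need not be strict). A functor is a surjective equivalence if it is surjective on objects (genuinely), full, and faithful. *)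

(* Defs.v *)
Set Implicit Arguments.
Unset Strict Implicit.

Record Category := {
  ob :> Type;
  hom : ob -> ob -> Type;
  idm : forall a : ob, hom a a;
  comp : forall a b c : ob, hom b c -> hom a b -> hom a c;
  comp_idl : forall a b (f : hom a b), comp (idm b) f = f;
  comp_idr : forall a b (f : hom a b), comp f (idm a) = f;
  comp_assoc : forall a b c d (f : hom a b) (g : hom b c) (h : hom c d),
      comp h (comp g f) = comp (comp h g) f
}.
Arguments hom {C} a b : rename.
Arguments idm {C} a : rename.
Arguments comp {C a b c} g f : rename.

Infix "∘" := comp (at level 40, left associativity).

Definition is_iso (C : Category) (a b : C) (f : hom a b) : Prop :=
  exists g : hom b a, g ∘ f = idm a /\ f ∘ g = idm b.

Definition eq_hom (C : Category) (a b : C) (e : a = b) : hom a b :=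
  match e in _ = y return hom a y with eq_refl => idm a end.

Record MonCat := {
  mcat :> Category;
  tens : mcat -> mcat -> mcat;
  tensm : forall a a' b b' : mcat, hom a a' -> hom b b' -> hom (tens a b) (tens a' b');
  munit : mcat;
  assoc : forall a b c : mcat, hom (tens (tens a b) c) (tens a (tens b c));
  lunit : forall a : mcat, hom (tens munit a) a;
  runit : forall a : mcat, hom (tens a munit) a;
  tensm_id : forall a b : mcat, tensm (idm a) (idm b) = idm (tens a b);
  tensm_comp : forall a a' a'' b b' b'' (f : hom a a') (f' : hom a' a'')
                 (g : hom b b') (g' : hom b' b''),
      tensm (f' ∘ f) (g' ∘ g) = tensm f' g' ∘ tensm f g;
  assoc_nat : forall a a' b b' c c' (f : hom a a') (g : hom b b') (h : hom c c'),
      assoc a' b' c' ∘ tensm (tensm f g) h = tensm f (tensm g h) ∘ assoc a b c;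
  lunit_nat : forall a a' (f : hom a a'),
      lunit a' ∘ tensm (idm munit) f = f ∘ lunit a;
  runit_nat : forall a a' (f : hom a a'),
      runit a' ∘ tensm f (idm munit) = f ∘ runit a;
  assoc_iso : forall a b c, is_iso (assoc a b c);
  lunit_iso : forall a, is_iso (lunit a);
  runit_iso : forall a, is_iso (runit a);
  pentagon : forall a b c d,
      assoc a b (tens c d) ∘ assoc (tens a b) c d
      = tensm (idm a) (assoc b c d) ∘ assoc a (tens b c) d ∘ tensm (assoc a b c) (idm d);
  triangle : forall a b,
      tensm (idm a) (lunit b) ∘ assoc a munit b = tensm (runit a) (idm b)
}.
Arguments tens {M} a b : rename.
Arguments tensm {M a a' b b'} f g : rename.
Arguments munit {M} : rename.
Arguments assoc {M} a b c : rename.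
Arguments lunit {M} a : rename.
Arguments runit {M} a : rename.

Record MonFunData (A B : MonCat) := {
  fobj :> A -> B;
  fmap : forall a a' : A, hom a a' -> hom (fobj a) (fobj a');
  phi : forall a b : A, hom (tens (fobj a) (fobj b)) (fobj (tens a b));
  phi0 : hom (@munit B) (fobj munit)
}.
Arguments fmap {A B} F {a a'} f : rename.
Arguments phi {A B} F a b : rename.
Arguments phi0 {A B} F : rename.

Definition is_monoidal_functor (A B : MonCat) (F : MonFunData A B) : Prop :=
  (forall a : A, fmap F (idm a) = idm (F a)) /\
  (forall (a b c : A) (f : hom a b) (g : hom b c), fmap F (g ∘ f) = fmap F g ∘ fmap F f) /\
  (forall (a a' b b' : A) (f : hom a a') (g : hom b b'),
      fmap F (tensm f g) ∘ phi F a b = phi F a' b' ∘ tensm (fmap F f) (fmap F g)) /\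
  (forall a b c : A,
      fmap F (assoc a b c) ∘ phi F (tens a b) c ∘ tensm (phi F a b) (idm (F c))
      = phi F a (tens b c) ∘ tensm (idm (F a)) (phi F b c) ∘ assoc (F a) (F b) (F c)) /\
  (forall a : A,
      fmap F (lunit a) ∘ phi F munit a ∘ tensm (phi0 F) (idm (F a)) = lunit (F a)) /\
  (forall a : A,
      fmap F (runit a) ∘ phi F a munit ∘ tensm (idm (F a)) (phi0 F) = runit (F a)).

Definition is_strong_monoidal_functor (A B : MonCat) (F : MonFunData A B) : Prop :=
  is_monoidal_functor F /\ (forall a b : A, is_iso (phi F a b)) /\ is_iso (phi0 F).

Definition is_strict_monoidal_functor (A B : MonCat) (F : MonFunData A B) : Prop :=
  is_monoidal_functor F /\
  exists (e : forall a b : A, F (tens a b) = tens (F a) (F b)) (e0 : F munit = munit),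
    (forall a b : A, phi F a b = eq_hom (eq_sym (e a b))) /\
    phi0 F = eq_hom (eq_sym e0).

Definition id_mf (A : MonCat) : MonFunData A A :=
  {| fobj := fun a => a;
     fmap := fun a a' f => f;
     phi := fun a b => idm (tens a b);
     phi0 := idm munit |}.

Definition comp_mf (A B C : MonCat) (G : MonFunData B C) (F : MonFunData A B)
  : MonFunData A C :=
  {| fobj := fun a => G (F a);
     fmap := fun a a' f => fmap G (fmap F f);
     phi := fun a b => fmap G (phi F a b) ∘ phi G (F a) (F b);
     phi0 := fmap G (phi0 F) ∘ phi0 G |}.

Definition is_monoidal_nat_iso {A B : MonCat} (F G : MonFunData A B)
  (theta : forall a : A, hom (F a) (G a)) : Prop :=
  (forall (a a' : A) (f : hom a a'), theta a' ∘ fmap F f = fmap G f ∘ theta a) /\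
  (forall a b : A, theta (tens a b) ∘ phi F a b = phi G a b ∘ tensm (theta a) (theta b)) /\
  theta munit ∘ phi0 F = phi0 G /\
  (forall a : A, is_iso (theta a)).
Arguments is_monoidal_nat_iso {A B} F G theta.

Definition monoidally_equivalent (A B : MonCat) : Prop :=
  exists (F : MonFunData A B) (G : MonFunData B A),
    is_strong_monoidal_functor F /\ is_strong_monoidal_functor G /\
    (exists eta : forall a : A, hom (id_mf A a) (comp_mf G F a),
        is_monoidal_nat_iso (id_mf A) (comp_mf G F) eta) /\
    (exists eps : forall b : B, hom (comp_mf F G b) (id_mf B b),
        is_monoidal_nat_iso (comp_mf F G) (id_mf B) eps).

Definition is_surjective_equivalence (A B : MonCat) (F : MonFunData A B) : Prop :=
  (forall b : B, exists a : A, F a = b) /\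
  (forall (a a' : A) (g : hom (F a) (F a')), exists f : hom a a', fmap F f = g) /\
  (forall (a a' : A) (f g : hom a a'), fmap F f = fmap F g -> f = g).

(* Main.v *)
Require Import Defs.
From Stdlib Require Import IndefiniteDescription.

Lemma cA {C : Category} {a b c d : C} (f : hom a b) (g : hom b c) (h : hom c d) :
  h ∘ (g ∘ f) = h ∘ g ∘ f.
Proof. apply comp_assoc. Qed.

Lemma iso_id {C : Category} (a : C) : is_iso (idm a).
Proof. exists (idm a); split; apply comp_idl. Qed.

Lemma iso_comp {C : Category} {a b c : C} (f : hom a b) (g : hom b c) :
  is_iso f -> is_iso g -> is_iso (g ∘ f).
Proof.
  intros [f' [H1 H2]] [g' [H3 H4]]. exists (f' ∘ g'); split.
  - rewrite cA, <- (cA g g' f'), H3, comp_idr. exact H1.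
  - rewrite cA, <- (cA f' f g), H2, comp_idr. exact H4.
Qed.

Lemma iso_cancel_l {C : Category} {a b c : C} (f : hom b c) (x y : hom a b) :
  is_iso f -> f ∘ x = f ∘ y -> x = y.
Proof.
  intros [f' [H1 H2]] E.
  rewrite <- (comp_idl x), <- (comp_idl y), <- H1, <- !cA, E. reflexivity.
Qed.

Lemma iso_cancel_r {C : Category} {a b c : C} (f : hom a b) (x y : hom b c) :
  is_iso f -> x ∘ f = y ∘ f -> x = y.
Proof.
  intros [f' [H1 H2]] E.
  rewrite <- (comp_idr x), <- (comp_idr y), <- H2, !cA, E. reflexivity.
Qed.

Definition inv {C : Category} {a b : C} {f : hom a b} (H : is_iso f) : hom b a :=
  proj1_sig (constructive_indefinite_description _ H).

Lemma inv_l {C : Category} {a b : C} {f : hom a b} (H : is_iso f) : inv H ∘ f = idm a.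
Proof. unfold inv. destruct (constructive_indefinite_description _ H) as [g [H1 H2]]. exact H1. Qed.
Lemma inv_r {C : Category} {a b : C} {f : hom a b} (H : is_iso f) : f ∘ inv H = idm b.
Proof. unfold inv. destruct (constructive_indefinite_description _ H) as [g [H1 H2]]. exact H2. Qed.
Lemma inv_iso {C : Category} {a b : C} {f : hom a b} (H : is_iso f) : is_iso (inv H).
Proof. exists f; split; [apply inv_r | apply inv_l]. Qed.

Lemma tensm_iso {M : MonCat} {a a' b b' : M} (f : hom a a') (g : hom b b') :
  is_iso f -> is_iso g -> is_iso (tensm f g).
Proof.
  intros [f' [H1 H2]] [g' [H3 H4]]. exists (tensm f' g'); split;
  rewrite <- tensm_comp; [rewrite H1, H3 | rewrite H2, H4]; apply tensm_id.
Qed.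

Lemma tensm_compl {M : MonCat} {a a' a'' b : M} (f : hom a a') (f' : hom a' a'') :
  tensm (f' ∘ f) (idm b) = tensm f' (idm b) ∘ tensm f (idm b).
Proof. rewrite <- tensm_comp, comp_idl. reflexivity. Qed.
Lemma tensm_compr {M : MonCat} {a b b' b'' : M} (g : hom b b') (g' : hom b' b'') :
  tensm (idm a) (g' ∘ g) = tensm (idm a) g' ∘ tensm (idm a) g.
Proof. rewrite <- tensm_comp, comp_idl. reflexivity. Qed.

Section MF.
Context {A B : MonCat} {F : MonFunData A B} (HF : is_monoidal_functor F).
Lemma mf_id (a : A) : fmap F (idm a) = idm (F a).
Proof. apply HF. Qed.
Lemma mf_comp (a b c : A) (f : hom a b) (g : hom b c) : fmap F (g ∘ f) = fmap F g ∘ fmap F f.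
Proof. apply HF. Qed.
Lemma mf_nat (a a' b b' : A) (f : hom a a') (g : hom b b') :
      fmap F (tensm f g) ∘ phi F a b = phi F a' b' ∘ tensm (fmap F f) (fmap F g).
Proof. apply HF. Qed.
Lemma mf_assoc (a b c : A) :
      fmap F (assoc a b c) ∘ phi F (tens a b) c ∘ tensm (phi F a b) (idm (F c))
      = phi F a (tens b c) ∘ tensm (idm (F a)) (phi F b c) ∘ assoc (F a) (F b) (F c).
Proof. apply HF. Qed.
Lemma mf_lunit (a : A) :
      fmap F (lunit a) ∘ phi F munit a ∘ tensm (phi0 F) (idm (F a)) = lunit (F a).
Proof. apply HF. Qed.
Lemma mf_runit (a : A) :
      fmap F (runit a) ∘ phi F a munit ∘ tensm (idm (F a)) (phi0 F) = runit (F a).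
Proof. apply HF. Qed.
Lemma mf_iso (a b : A) (f : hom a b) : is_iso f -> is_iso (fmap F f).
Proof.
  intros [g [H1 H2]]. exists (fmap F g); split; rewrite <- mf_comp, ?H1, ?H2; apply mf_id.
Qed.
End MF.

Ltac norm := repeat rewrite cA.
Ltac prefproof L := intros; rewrite <- !cA; f_equal; rewrite ?cA; apply L.
Ltac startc := apply (iso_cancel_l (idm _)); [apply iso_id|]; norm.

Section MF2.
Context {A B : MonCat} {F : MonFunData A B} (HF : is_monoidal_functor F).
Lemma mfp_comp (a b c : A) (f : hom a b) (g : hom b c) X (z : hom (F c) X) :
  z ∘ fmap F g ∘ fmap F f = z ∘ fmap F (g ∘ f).
Proof. rewrite (mf_comp HF). symmetry; apply cA. Qed.
Lemma mfp_nat (a a' b b' : A) (f : hom a a') (g : hom b b') X (z : hom _ X) :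
      z ∘ phi F a' b' ∘ tensm (fmap F f) (fmap F g) = z ∘ fmap F (tensm f g) ∘ phi F a b.
Proof. intros; rewrite <- !cA; f_equal; symmetry; apply (mf_nat HF). Qed.
Lemma mfp_assoc (a b c : A) X (z : hom _ X) :
      z ∘ fmap F (assoc a b c) ∘ phi F (tens a b) c ∘ tensm (phi F a b) (idm (F c))
      = z ∘ phi F a (tens b c) ∘ tensm (idm (F a)) (phi F b c) ∘ assoc (F a) (F b) (F c).
Proof. prefproof (mf_assoc HF). Qed.
Lemma mfp_lunit (a : A) X (z : hom _ X) :
      z ∘ fmap F (lunit a) ∘ phi F munit a ∘ tensm (phi0 F) (idm (F a)) = z ∘ lunit (F a).
Proof. prefproof (mf_lunit HF). Qed.
Lemma mfp_runit (a : A) X (z : hom _ X) :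
      z ∘ fmap F (runit a) ∘ phi F a munit ∘ tensm (idm (F a)) (phi0 F) = z ∘ runit (F a).
Proof. prefproof (mf_runit HF). Qed.
End MF2.

Lemma comp_monoidal {A B C : MonCat} (G : MonFunData B C) (F : MonFunData A B) :
  is_monoidal_functor F -> is_monoidal_functor G -> is_monoidal_functor (comp_mf G F).
Proof.
  intros HF HG. unfold is_monoidal_functor; simpl.
  split; [|split; [|split; [|split; [|split]]]].
  - intros a. rewrite (mf_id HF), (mf_id HG). reflexivity.
  - intros. rewrite (mf_comp HF), (mf_comp HG). reflexivity.
  - intros. startc.
    rewrite (mfp_comp HG), (mf_nat HF), <- (mfp_comp HG).
    rewrite (mfp_nat HG). reflexivity.
  - intros a b c. startc.
    rewrite tensm_compl, tensm_compr. norm.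
    rewrite <- (mf_id HG (F c)).
    rewrite (mfp_nat HG), !(mfp_comp HG). norm. rewrite (mf_assoc HF).
    rewrite !(mf_comp HG). norm.
    rewrite (mf_id HG (F c)), (mfp_assoc HG).
    rewrite <- (mf_id HG (F a)).
    rewrite (mfp_nat HG). reflexivity.
  - intros a. startc.
    rewrite tensm_compl. norm.
    rewrite <- (mf_id HG (F a)).
    rewrite (mfp_nat HG), !(mfp_comp HG). norm. rewrite (mf_lunit HF).
    rewrite (mf_id HG (F a)), (mfp_lunit HG). reflexivity.
  - intros a. startc.
    rewrite tensm_compr. norm.
    rewrite <- (mf_id HG (F a)).
    rewrite (mfp_nat HG), !(mfp_comp HG). norm. rewrite (mf_runit HF).
    rewrite (mf_id HG (F a)), (mfp_runit HG). reflexivity.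
Qed.

Lemma comp_strong {A B C : MonCat} (G : MonFunData B C) (F : MonFunData A B) :
  is_strong_monoidal_functor F -> is_strong_monoidal_functor G ->
  is_strong_monoidal_functor (comp_mf G F).
Proof.
  intros [HF [HF1 HF2]] [HG [HG1 HG2]]. split; [apply comp_monoidal; auto|split; simpl].
  - intros. apply iso_comp; auto. apply (mf_iso HG); auto.
  - apply iso_comp; auto. apply (mf_iso HG); auto.
Qed.

Lemma invp_r {C : Category} {a b : C} {f : hom a b} (H : is_iso f) X (z : hom b X) :
  z ∘ f ∘ inv H = z.
Proof. rewrite <- cA, inv_r. apply comp_idr. Qed.
Lemma invp_l {C : Category} {a b : C} {f : hom a b} (H : is_iso f) X (z : hom a X) :
  z ∘ inv H ∘ f = z.
Proof. rewrite <- cA, inv_l. apply comp_idr. Qed.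
Lemma tp_comp {M : MonCat} {a a' a'' b b' b'' : M} (f : hom a a') (f' : hom a' a'')
                 (g : hom b b') (g' : hom b' b'') X (z : hom _ X) :
      z ∘ tensm f' g' ∘ tensm f g = z ∘ tensm (f' ∘ f) (g' ∘ g).
Proof. rewrite tensm_comp. symmetry; apply cA. Qed.
Lemma idp {C : Category} {a b : C} (f : hom a b) : f ∘ idm a = idm b ∘ f.
Proof. rewrite comp_idl, comp_idr. reflexivity. Qed.

Definition miso {A B : MonCat} (F G : MonFunData A B) :=
  exists th, is_monoidal_nat_iso F G th.

Section NI.
Context {A B : MonCat} {F G : MonFunData A B} {th : forall a, hom (F a) (G a)}
  (H : is_monoidal_nat_iso F G th).
Lemma ni_nat (a a' : A) (f : hom a a') : th a' ∘ fmap F f = fmap G f ∘ th a.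
Proof. apply H. Qed.
Lemma nip_nat (a a' : A) (f : hom a a') X (z : hom _ X) :
  z ∘ th a' ∘ fmap F f = z ∘ fmap G f ∘ th a.
Proof. rewrite <- !cA, ni_nat. reflexivity. Qed.
Lemma ni_tens (a b : A) : th (tens a b) ∘ phi F a b = phi G a b ∘ tensm (th a) (th b).
Proof. apply H. Qed.
Lemma nip_tens (a b : A) X (z : hom _ X) :
  z ∘ th (tens a b) ∘ phi F a b = z ∘ phi G a b ∘ tensm (th a) (th b).
Proof. rewrite <- !cA, ni_tens. reflexivity. Qed.
Lemma ni_unit : th munit ∘ phi0 F = phi0 G.
Proof. apply H. Qed.
Lemma nip_unit X (z : hom _ X) : z ∘ th munit ∘ phi0 F = z ∘ phi0 G.
Proof. rewrite <- !cA, ni_unit. reflexivity. Qed.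
Lemma ni_iso a : is_iso (th a).
Proof. apply H. Qed.
End NI.

Lemma miso_refl {A B : MonCat} (F : MonFunData A B) : miso F F.
Proof.
  exists (fun a => idm (F a)). split; [|split; [|split]].
  - intros. rewrite comp_idl, comp_idr. reflexivity.
  - intros. rewrite tensm_id, comp_idl, comp_idr. reflexivity.
  - apply comp_idl.
  - intros; apply iso_id.
Qed.

Lemma miso_sym {A B : MonCat} (F G : MonFunData A B) : miso F G -> miso G F.
Proof.
  intros [th H]. exists (fun a => inv (ni_iso H a)). split; [|split; [|split]].
  - intros a a' f. apply (iso_cancel_l (th a')); [apply (ni_iso H)|]. norm.
    rewrite inv_r, comp_idl, (ni_nat H), invp_r. reflexivity.
  - intros a b. apply (iso_cancel_l (th (tens a b))); [apply (ni_iso H)|]. norm.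
    rewrite inv_r, comp_idl, (ni_tens H), tp_comp, !inv_r, tensm_id, comp_idr. reflexivity.
  - apply (iso_cancel_l (th munit)); [apply (ni_iso H)|]. norm.
    rewrite inv_r, comp_idl, (ni_unit H). reflexivity.
  - intros; apply inv_iso.
Qed.

Lemma miso_trans {A B : MonCat} (F G K : MonFunData A B) : miso F G -> miso G K -> miso F K.
Proof.
  intros [th H] [th' H']. exists (fun a => th' a ∘ th a). split; [|split; [|split]].
  - intros a a' f. startc. rewrite (nip_nat H), (nip_nat H'). reflexivity.
  - intros a b. startc. rewrite (nip_tens H), (nip_tens H'), tp_comp. reflexivity.
  - startc. rewrite (nip_unit H), (nip_unit H'). reflexivity.
  - intros; apply iso_comp; [apply (ni_iso H) | apply (ni_iso H')].
Qed.

Lemma miso_whr {A B C : MonCat} (F G : MonFunData A B) (K : MonFunData C A) :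
  miso F G -> miso (comp_mf F K) (comp_mf G K).
Proof.
  intros [th H]. exists (fun c => th (K c)). split; [|split; [|split]]; simpl.
  - intros. apply (ni_nat H).
  - intros a b. startc. rewrite (nip_nat H), (nip_tens H). reflexivity.
  - startc. rewrite (nip_nat H), (nip_unit H). reflexivity.
  - intros; apply (ni_iso H).
Qed.

Lemma miso_whl {A B D : MonCat} (F G : MonFunData A B) (K : MonFunData B D) :
  is_monoidal_functor K -> miso F G -> miso (comp_mf K F) (comp_mf K G).
Proof.
  intros HK [th H]. exists (fun a => fmap K (th a)). split; [|split; [|split]]; simpl.
  - intros. rewrite <- !(mf_comp HK), (ni_nat H). reflexivity.
  - intros a b. startc. rewrite (mfp_comp HK), (ni_tens H), <- (mfp_comp HK), (mfp_nat HK).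
    reflexivity.
  - startc. rewrite (mfp_comp HK), (ni_unit H). reflexivity.
  - intros; apply (mf_iso HK), (ni_iso H).
Qed.

Lemma miso_assoc {A B C D : MonCat} (H : MonFunData C D) (G : MonFunData B C)
  (F : MonFunData A B) :
  is_monoidal_functor H -> miso (comp_mf (comp_mf H G) F) (comp_mf H (comp_mf G F)).
Proof.
  intros HH. exists (fun a => idm _). split; [|split; [|split]]; simpl.
  - intros. rewrite comp_idl, comp_idr. reflexivity.
  - intros. rewrite tensm_id, comp_idl, comp_idr, (mf_comp HH). apply cA.
  - rewrite comp_idl, (mf_comp HH). apply cA.
  - intros; apply iso_id.
Qed.

Lemma miso_idl {A B : MonCat} (F : MonFunData A B) : miso (comp_mf (id_mf B) F) F.
Proof.
  exists (fun a => idm _). split; [|split; [|split]]; simpl.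
  - intros. rewrite comp_idl, comp_idr. reflexivity.
  - intros. rewrite tensm_id, comp_idl, !comp_idr. reflexivity.
  - rewrite !comp_idl, comp_idr. reflexivity.
  - intros; apply iso_id.
Qed.

Lemma miso_idr {A B : MonCat} (F : MonFunData A B) :
  is_monoidal_functor F -> miso (comp_mf F (id_mf A)) F.
Proof.
  intros HF. exists (fun a => idm _). split; [|split; [|split]]; simpl.
  - intros. rewrite comp_idl, comp_idr. reflexivity.
  - intros. rewrite tensm_id, comp_idl, comp_idr, (mf_id HF), comp_idl. reflexivity.
  - rewrite !comp_idl, (mf_id HF). apply comp_idl.
  - intros; apply iso_id.
Qed.

Lemma meq_sym (A B : MonCat) : monoidally_equivalent A B -> monoidally_equivalent B A.
Proof.
  intros [F [G [HF [HG [[eta He] [eps Hs]]]]]].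
  exists G, F. split; [exact HG|split; [exact HF|split]].
  - apply miso_sym. exists eps; exact Hs.
  - apply miso_sym. exists eta; exact He.
Qed.

Lemma meq_trans (A B C : MonCat) :
  monoidally_equivalent A C -> monoidally_equivalent C B -> monoidally_equivalent A B.
Proof.
  intros [F1 [G1 [HF1 [HG1 [He1 Hs1]]]]] [F2 [G2 [HF2 [HG2 [He2 Hs2]]]]].
  exists (comp_mf F2 F1), (comp_mf G1 G2).
  split; [apply comp_strong; auto|split; [apply comp_strong; auto|split]].
  - apply (miso_trans _ _ _ He1).
    apply (miso_trans _ (comp_mf G1 (comp_mf (id_mf C) F1))).
    { apply miso_whl; [apply HG1|]. apply miso_sym, miso_idl. }
    apply (miso_trans _ (comp_mf G1 (comp_mf (comp_mf G2 F2) F1))).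
    { apply miso_whl; [apply HG1|]. apply miso_whr. exact He2. }
    apply (miso_trans _ (comp_mf G1 (comp_mf G2 (comp_mf F2 F1)))).
    { apply miso_whl; [apply HG1|]. apply miso_assoc, HG2. }
    apply miso_sym, miso_assoc, HG1.
  - apply (miso_trans _ (comp_mf F2 (comp_mf F1 (comp_mf G1 G2)))).
    { apply miso_assoc, HF2. }
    apply (miso_trans _ (comp_mf F2 (comp_mf (comp_mf F1 G1) G2))).
    { apply miso_whl; [apply HF2|]. apply miso_sym, miso_assoc, HF1. }
    apply (miso_trans _ (comp_mf F2 (comp_mf (id_mf C) G2))).
    { apply miso_whl; [apply HF2|]. apply miso_whr. exact Hs1. }
    apply (miso_trans _ (comp_mf F2 G2)).
    { apply miso_whl; [apply HF2|]. apply miso_idl. }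
    exact Hs2.
Qed.

Lemma tensm_split {M : MonCat} {a a' b b' : M} (f : hom a a') (g : hom b b') :
  tensm f g = tensm (idm a') g ∘ tensm f (idm b).
Proof. rewrite <- tensm_comp, comp_idl, comp_idr. reflexivity. Qed.
Lemma tensm_split' {M : MonCat} {a a' b b' : M} (f : hom a a') (g : hom b b') :
  tensm f g = tensm f (idm b') ∘ tensm (idm a) g.
Proof. rewrite <- tensm_comp, comp_idl, comp_idr. reflexivity. Qed.
Lemma assocp_nat {M : MonCat} {a a' b b' c c' : M} (f : hom a a') (g : hom b b') (h : hom c c')
  X (z : hom _ X) :
  z ∘ tensm f (tensm g h) ∘ assoc a b c = z ∘ assoc a' b' c' ∘ tensm (tensm f g) h.
Proof. rewrite <- !cA, assoc_nat. reflexivity. Qed.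
Lemma lunitp_nat {M : MonCat} {a a' : M} (f : hom a a') X (z : hom _ X) :
  z ∘ lunit a' ∘ tensm (idm munit) f = z ∘ f ∘ lunit a.
Proof. rewrite <- !cA, lunit_nat. reflexivity. Qed.
Lemma runitp_nat {M : MonCat} {a a' : M} (f : hom a a') X (z : hom _ X) :
  z ∘ runit a' ∘ tensm f (idm munit) = z ∘ f ∘ runit a.
Proof. rewrite <- !cA, runit_nat. reflexivity. Qed.

Section L3.
Context {A B : MonCat} {F : MonFunData A B} (HF : is_strong_monoidal_functor F)
  (full : forall (a a' : A) (g : hom (F a) (F a')), exists f : hom a a', fmap F f = g)
  (faith : forall (a a' : A) (f g : hom a a'), fmap F f = fmap F g -> f = g)
  (esurj : forall b : B, exists a (u : hom (F a) b), is_iso u).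

Let HFm : is_monoidal_functor F := proj1 HF.
Let phiI (a b : A) : is_iso (phi F a b) := proj1 (proj2 HF) a b.
Let phi0I : is_iso (phi0 F) := proj2 (proj2 HF).

Definition pre {a a' : A} (g : hom (F a) (F a')) : hom a a' :=
  proj1_sig (constructive_indefinite_description _ (full _ _ g)).
Lemma pre_spec {a a' : A} (g : hom (F a) (F a')) : fmap F (pre g) = g.
Proof. unfold pre. destruct (constructive_indefinite_description _ (full _ _ g)); auto. Qed.

Definition sec (b : B) : A := proj1_sig (constructive_indefinite_description _ (esurj b)).
Definition uu (b : B) : hom (F (sec b)) b :=
  proj1_sig (constructive_indefinite_description _
     (proj2_sig (constructive_indefinite_description _ (esurj b)))).
Lemma uu_iso b : is_iso (uu b).
Proof.
  unfold uu. destruct (constructive_indefinite_description _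
     (proj2_sig (constructive_indefinite_description _ (esurj b)))); auto.
Qed.
Definition vv (b : B) : hom b (F (sec b)) := inv (uu_iso b).
Definition phii (a b : A) := inv (phiI a b).
Definition phi0i := inv phi0I.

Definition Gd : MonFunData B A :=
  {| fobj := sec;
     fmap := fun b b' g => pre (vv b' ∘ g ∘ uu b);
     phi := fun b b' => pre (vv (tens b b') ∘ tensm (uu b) (uu b') ∘ phii (sec b) (sec b'));
     phi0 := pre (vv munit ∘ phi0i) |}.

Lemma uv b X (z : hom b X) : z ∘ uu b ∘ vv b = z.
Proof. apply invp_r. Qed.
Lemma vu b X (z : hom _ X) : z ∘ vv b ∘ uu b = z.
Proof. apply invp_l. Qed.
Lemma uv0 b : uu b ∘ vv b = idm b.
Proof. apply inv_r. Qed.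
Lemma vu0 b : vv b ∘ uu b = idm _.
Proof. apply inv_l. Qed.
Lemma pp a b X (z : hom _ X) : z ∘ phii a b ∘ phi F a b = z.
Proof. apply invp_l. Qed.
Lemma pp' a b X (z : hom _ X) : z ∘ phi F a b ∘ phii a b = z.
Proof. apply invp_r. Qed.
Lemma pp0 a b : phii a b ∘ phi F a b = idm _.
Proof. apply inv_l. Qed.
Lemma pp0' a b : phi F a b ∘ phii a b = idm _.
Proof. apply inv_r. Qed.
Lemma p0 X (z : hom _ X) : z ∘ phi0i ∘ phi0 F = z.
Proof. apply invp_l. Qed.

Lemma F_tens {a a' b b' : A} (f : hom a a') (g : hom b b') :
  fmap F (tensm f g) = phi F a' b' ∘ tensm (fmap F f) (fmap F g) ∘ phii a b.
Proof. rewrite <- (mf_nat HFm), pp'. reflexivity. Qed.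

Lemma Fpre_assoc a b c X (z : hom _ X) :
  z ∘ phii a (tens b c) ∘ fmap F (assoc a b c) =
  z ∘ tensm (idm (F a)) (phi F b c) ∘ assoc (F a) (F b) (F c)
    ∘ tensm (phii a b) (idm (F c)) ∘ phii (tens a b) c.
Proof.
  apply (iso_cancel_r (phi F (tens a b) c ∘ tensm (phi F a b) (idm (F c)))).
  { apply iso_comp; [apply tensm_iso; [apply phiI|apply iso_id]|apply phiI]. }
  norm. rewrite (mfp_assoc HFm), pp, pp, tp_comp, pp0, comp_idl, tensm_id, comp_idr. reflexivity.
Qed.

Lemma Fp_lunit a X (z : hom _ X) :
  z ∘ fmap F (lunit a) = z ∘ lunit (F a) ∘ tensm phi0i (idm (F a)) ∘ phii munit a.
Proof.
  apply (iso_cancel_r (phi F munit a ∘ tensm (phi0 F) (idm (F a)))).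
  { apply iso_comp; [apply tensm_iso; [apply phi0I|apply iso_id]|apply phiI]. }
  norm. rewrite (mfp_lunit HFm), pp, tp_comp, comp_idl. unfold phi0i. rewrite inv_l, tensm_id, comp_idr.
  reflexivity.
Qed.
Lemma Fp_runit a X (z : hom _ X) :
  z ∘ fmap F (runit a) = z ∘ runit (F a) ∘ tensm (idm (F a)) phi0i ∘ phii a munit.
Proof.
  apply (iso_cancel_r (phi F a munit ∘ tensm (idm (F a)) (phi0 F))).
  { apply iso_comp; [apply tensm_iso; [apply iso_id|apply phi0I]|apply phiI]. }
  norm. rewrite (mfp_runit HFm), pp, tp_comp, comp_idl. unfold phi0i. rewrite inv_l, tensm_id, comp_idr.
  reflexivity.
Qed.

Lemma FGm {b b' : B} (g : hom b b') : fmap F (fmap Gd g) = vv b' ∘ g ∘ uu b.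
Proof. apply pre_spec. Qed.
Lemma FGphi (b b' : B) : fmap F (phi Gd b b') =
  vv (tens b b') ∘ tensm (uu b) (uu b') ∘ phii (sec b) (sec b').
Proof. apply pre_spec. Qed.
Lemma FGphi0 : fmap F (phi0 Gd) = vv munit ∘ phi0i.
Proof. apply pre_spec. Qed.

Lemma Gd_monoidal : is_monoidal_functor Gd.
Proof.
  split; [|split; [|split; [|split; [|split]]]].
  - intros b. apply faith. rewrite FGm, (mf_id HFm), comp_idr, vu0. reflexivity.
  - intros. apply faith. rewrite (mf_comp HFm), !FGm. norm. rewrite uv. reflexivity.
  - intros. apply faith. rewrite !(mf_comp HFm), FGm, FGphi, F_tens, !FGm, FGphi. norm.
    rewrite uv, pp, !tp_comp. norm. rewrite !uv0, !comp_idl. reflexivity.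
  - intros b1 b2 b3. apply faith. rewrite !(mf_comp HFm), !FGm, !FGphi, !F_tens, !FGphi, !(mf_id HFm).
    norm. rewrite uv, !pp, !tp_comp. norm. rewrite !uv0, !comp_idl, !comp_idr.
    rewrite Fpre_assoc, tp_comp. norm. rewrite pp, comp_idr, assocp_nat, tp_comp, comp_idr.
    reflexivity.
  - intros b. apply faith. rewrite !(mf_comp HFm), FGm, FGphi, F_tens, FGphi0, (mf_id HFm).
    norm. rewrite uv, pp, !tp_comp. norm. rewrite !uv0, !comp_idl, !comp_idr.
    startc. rewrite Fp_lunit, (tensm_split phi0i). norm. rewrite lunitp_nat, vu. reflexivity.
  - intros b. apply faith. rewrite !(mf_comp HFm), FGm, FGphi, F_tens, FGphi0, (mf_id HFm).
    norm. rewrite uv, pp, !tp_comp. norm. rewrite !uv0, !comp_idl, !comp_idr.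
    startc. rewrite Fp_runit, (tensm_split' (uu _) phi0i). norm. rewrite runitp_nat, vu. reflexivity.
Qed.

Lemma p0' X (z : hom _ X) : z ∘ phi0 F ∘ phi0i = z.
Proof. apply invp_r. Qed.

Lemma pre_iso {a a' : A} (g : hom (F a) (F a')) : is_iso g -> is_iso (pre g).
Proof.
  intros [g' [H1 H2]]. exists (pre g'); split; apply faith;
  rewrite (mf_comp HFm), !pre_spec, (mf_id HFm); assumption.
Qed.

Lemma Gd_strong : is_strong_monoidal_functor Gd.
Proof.
  split; [apply Gd_monoidal|split].
  - intros. apply pre_iso. repeat apply iso_comp.
    + apply inv_iso.
    + apply tensm_iso; apply uu_iso.
    + apply inv_iso.
  - apply pre_iso. apply iso_comp; apply inv_iso.
Qed.

Theorem L3_equiv : monoidally_equivalent A B.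
Proof.
  exists F, Gd. split; [exact HF|split; [apply Gd_strong|split]].
  - exists (fun a => pre (vv (F a))). split; [|split; [|split]];
      cbn [comp_mf id_mf fobj fmap phi phi0].
    + intros. apply faith. rewrite !(mf_comp HFm), !pre_spec, FGm, uv. reflexivity.
    + intros. apply faith. rewrite !(mf_comp HFm), (mf_id HFm), F_tens, !pre_spec, FGm, FGphi.
      norm. rewrite uv, pp, tp_comp, !uv0, tensm_id, !comp_idr, pp'. reflexivity.
    + apply faith. rewrite !(mf_comp HFm), (mf_id HFm), !pre_spec, FGm, FGphi0.
      norm. rewrite uv, p0', comp_idr. reflexivity.
    + intros. apply pre_iso, inv_iso.
  - exists uu. split; [|split; [|split]]; cbn [comp_mf id_mf fobj fmap phi phi0].
    + intros. rewrite FGm. norm. rewrite uv0, comp_idl. reflexivity.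
    + intros. rewrite FGphi. norm. rewrite uv0, comp_idl, pp, comp_idl. reflexivity.
    + rewrite FGphi0. norm. rewrite uv0, comp_idl. unfold phi0i. apply inv_l.
    + apply uu_iso.
Qed.
End L3.

Lemma eq_hom_iso (C : Category) (a b : C) (e : a = b) : is_iso (eq_hom e).
Proof. destruct e. apply iso_id. Qed.

Lemma strict_strong (A B : MonCat) (P : MonFunData A B) :
  is_strict_monoidal_functor P -> is_strong_monoidal_functor P.
Proof.
  intros [HP [e [e0 [H1 H2]]]]. split; [exact HP|split].
  - intros. rewrite H1. apply eq_hom_iso.
  - rewrite H2. apply eq_hom_iso.
Qed.

Lemma backward (A B C : MonCat) (P : MonFunData C A) (Q : MonFunData C B) :
  is_strict_monoidal_functor P -> is_surjective_equivalence P ->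
  is_strict_monoidal_functor Q -> is_surjective_equivalence Q ->
  monoidally_equivalent A B.
Proof.
  intros HP [Ps [Pf Pff]] HQ [Qs [Qf Qff]].
  apply (meq_trans _ _ C).
  - apply meq_sym. apply (L3_equiv (strict_strong _ _ _ HP) Pf Pff).
    intros a. destruct (Ps a) as [c e]. exists c, (eq_hom e). apply eq_hom_iso.
  - apply (L3_equiv (strict_strong _ _ _ HQ) Qf Qff).
    intros a. destruct (Qs a) as [c e]. exists c, (eq_hom e). apply eq_hom_iso.
Qed.

Section Fwd.
Context {A B : MonCat} {F : MonFunData A B} (HF : is_strong_monoidal_functor F)
  (full : forall (a a' : A) (g : hom (F a) (F a')), exists f : hom a a', fmap F f = g)
  (faith : forall (a a' : A) (f g : hom a a'), fmap F f = fmap F g -> f = g)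
  (esurj : forall b : B, exists a (u : hom (F a) b), is_iso u).

Let HFm : is_monoidal_functor F := proj1 HF.

Record cobj := mkO { oA : A; oB : B; oth : hom (F oA) oB; othi : hom oB (F oA);
  oth1 : othi ∘ oth = idm _; oth2 : oth ∘ othi = idm _ }.

Definition Ccat : Category :=
  {| ob := cobj;
     hom := fun x y => hom (oA x) (oA y);
     idm := fun x => idm (oA x);
     comp := fun x y z g f => g ∘ f;
     comp_idl := fun x y f => comp_idl f;
     comp_idr := fun x y f => comp_idr f;
     comp_assoc := fun a b c d f g h => comp_assoc f g h |}.

Definition tobj_th (x y : cobj) : hom (F (tens (oA x) (oA y))) (tens (oB x) (oB y)) :=
  tensm (oth x) (oth y) ∘ phii HF (oA x) (oA y).
Definition tobj_thi (x y : cobj) : hom (tens (oB x) (oB y)) (F (tens (oA x) (oA y))) :=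
  phi F (oA x) (oA y) ∘ tensm (othi x) (othi y).
Lemma tobj1 x y : tobj_thi x y ∘ tobj_th x y = idm _.
Proof.
  unfold tobj_th, tobj_thi. norm. rewrite (tp_comp (oth x) (othi x) (oth y) (othi y)), !oth1, tensm_id, comp_idr. apply pp0'.
Qed.
Lemma tobj2 x y : tobj_th x y ∘ tobj_thi x y = idm _.
Proof.
  unfold tobj_th, tobj_thi. norm. rewrite pp, <- tensm_comp, !oth2. apply tensm_id.
Qed.
Definition tobj (x y : cobj) : cobj := mkO (tens (oA x) (oA y)) (tens (oB x) (oB y)) _ _ (tobj1 x y) (tobj2 x y).
Lemma uobj1 : phi0 F ∘ phi0i HF = idm _.
Proof. apply inv_r. Qed.
Lemma uobj2 : phi0i HF ∘ phi0 F = idm _.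
Proof. apply inv_l. Qed.
Definition uobj : cobj := mkO munit munit _ _ uobj1 uobj2.

Definition CM : MonCat :=
  {| mcat := Ccat; tens := tobj;
     tensm := fun (a a' b b' : Ccat) (f : hom a a') (g : hom b b') => @tensm A _ _ _ _ f g;
     munit := uobj;
     assoc := fun a b c => assoc (oA a) (oA b) (oA c);
     lunit := fun a => lunit (oA a);
     runit := fun a => runit (oA a);
     tensm_id := ltac:(intros; apply tensm_id);
     tensm_comp := ltac:(intros; apply tensm_comp);
     assoc_nat := ltac:(intros; apply assoc_nat);
     lunit_nat := ltac:(intros; apply lunit_nat);
     runit_nat := ltac:(intros; apply runit_nat);
     assoc_iso := ltac:(intros; apply assoc_iso);
     lunit_iso := ltac:(intros; apply lunit_iso);
     runit_iso := ltac:(intros; apply runit_iso);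
     pentagon := ltac:(intros; apply pentagon);
     triangle := ltac:(intros; apply triangle) |}.

Lemma oth1p (x : cobj) X (z : hom _ X) : z ∘ othi x ∘ oth x = z.
Proof. rewrite <- cA, oth1. apply comp_idr. Qed.
Lemma oth2p (x : cobj) X (z : hom _ X) : z ∘ oth x ∘ othi x = z.
Proof. rewrite <- cA, oth2. apply comp_idr. Qed.

Definition Pf : MonFunData CM A :=
  {| fobj := fun x : CM => oA x; fmap := fun (x y : CM) (f : hom x y) => (f : hom (oA x) (oA y));
     phi := fun (x y : CM) => idm (tens (oA x) (oA y)); phi0 := idm munit |}.

Lemma Pf_strict : is_strict_monoidal_functor Pf.
Proof.
  split.
  - split; [|split; [|split; [|split; [|split]]]]; intros; cbn;
      rewrite ?tensm_id, ?comp_idl, ?comp_idr; reflexivity.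
  - exists (fun x y => eq_refl), eq_refl. split; intros; reflexivity.
Qed.

Lemma Pf_surj : is_surjective_equivalence Pf.
Proof.
  split; [|split].
  - intros a. exists (mkO a (F a) (idm _) (idm _) (comp_idl _) (comp_idl _)). reflexivity.
  - intros x y g. exists g. reflexivity.
  - intros x y f g H. exact H.
Qed.

Definition Qf : MonFunData CM B :=
  {| fobj := fun x : CM => oB x;
     fmap := fun (x y : CM) (f : hom x y) => oth y ∘ fmap F (f : hom (oA x) (oA y)) ∘ othi x;
     phi := fun (x y : CM) => idm (tens (oB x) (oB y)); phi0 := idm munit |}.

Lemma Qf_strict : is_strict_monoidal_functor Qf.
Proof.
  split.
  - split; [|split; [|split; [|split; [|split]]]]; cbn; unfold tobj_th, tobj_thi.
    + intros. rewrite (mf_id HFm), comp_idr. apply oth2.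
    + intros. rewrite (mf_comp HFm). norm. rewrite oth1p. reflexivity.
    + intros. rewrite comp_idr, comp_idl, (F_tens HF). norm. rewrite !pp, <- !tensm_comp.
      reflexivity.
    + intros. rewrite !tensm_id, comp_idl, !comp_idr. cbn [oth othi tobj uobj oA oB].
      unfold tobj_th, tobj_thi. startc.
      rewrite (Fpre_assoc HF), pp, !tp_comp. norm. rewrite !pp, !comp_idl, !comp_idr.
      rewrite pp0, comp_idl, <- assoc_nat, <- cA, <- !tensm_comp, !oth2, !tensm_id.
      apply comp_idr.
    + intros. rewrite !tensm_id, !comp_idr. cbn [oth othi tobj uobj oA oB].
      unfold tobj_th, tobj_thi. startc.
      rewrite (Fp_lunit HF), pp, tp_comp, uobj2, !comp_idl, <- cA, lunit_nat, cA, oth2.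
      apply comp_idl.
    + intros. rewrite !tensm_id, !comp_idr. cbn [oth othi tobj uobj oA oB].
      unfold tobj_th, tobj_thi. startc.
      rewrite (Fp_runit HF), pp, tp_comp, uobj2, !comp_idl, <- cA, runit_nat, cA, oth2.
      apply comp_idl.
  - exists (fun x y => eq_refl), eq_refl. split; intros; reflexivity.
Qed.

Lemma Qf_surj : is_surjective_equivalence Qf.
Proof.
  split; [|split].
  - intros b. destruct (esurj b) as [a [u Hu]].
    exists (mkO a b u (inv Hu) (inv_l Hu) (inv_r Hu)). reflexivity.
  - intros x y g. destruct (full (oA x) (oA y) (othi y ∘ g ∘ oth x)) as [f Hf].
    exists f. cbn. rewrite Hf. norm. rewrite oth2, comp_idl, oth2p. reflexivity.
  - intros x y f g H. cbn in H. apply faith.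
    assert (Ix : is_iso (othi x)) by (exists (oth x); split; [apply oth2|apply oth1]).
    assert (Iy : is_iso (oth y)) by (exists (othi y); split; [apply oth1|apply oth2]).
    apply (iso_cancel_l _ _ _ Iy). apply (iso_cancel_r _ _ _ Ix). exact H.
Qed.

Lemma fwd_concl : exists (C : MonCat) (P : MonFunData C A) (Q : MonFunData C B),
    is_strict_monoidal_functor P /\ is_surjective_equivalence P /\
    is_strict_monoidal_functor Q /\ is_surjective_equivalence Q.
Proof.
  exists CM, Pf, Qf. split; [apply Pf_strict|split; [apply Pf_surj|split;
    [apply Qf_strict|apply Qf_surj]]].
Qed.
End Fwd.

Lemma equiv_props (A B : MonCat) (F : MonFunData A B) (G : MonFunData B A) :
  is_strong_monoidal_functor G ->
  miso (id_mf A) (comp_mf G F) -> miso (comp_mf F G) (id_mf B) ->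
  (forall (a a' : A) (g : hom (F a) (F a')), exists f : hom a a', fmap F f = g) /\
  (forall (a a' : A) (f g : hom a a'), fmap F f = fmap F g -> f = g) /\
  (forall b : B, exists a (u : hom (F a) b), is_iso u).
Proof.
  intros HG [eta He] [eps Hs].
  assert (faithG : forall (b b' : B) (f g : hom b b'), fmap G f = fmap G g -> f = g).
  { intros b b' f g H. apply (iso_cancel_r (eps b)); [apply (ni_iso Hs)|].
    pose proof (ni_nat Hs _ _ f) as E1. pose proof (ni_nat Hs _ _ g) as E2. cbn in E1, E2.
    cbn. rewrite <- E1, <- E2, H. reflexivity. }
  split; [|split].
  - intros a a' g. exists (inv (ni_iso He a') ∘ fmap G g ∘ eta a).
    apply faithG. apply (iso_cancel_r (eta a)); [apply (ni_iso He)|].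
    pose proof (ni_nat He _ _ (inv (ni_iso He a') ∘ fmap G g ∘ eta a)) as E. cbn in E.
    cbn. rewrite <- E. norm. rewrite inv_r, comp_idl. reflexivity.
  - intros a a' f g H. apply (iso_cancel_l (eta a')); [apply (ni_iso He)|].
    pose proof (ni_nat He _ _ f) as E1. pose proof (ni_nat He _ _ g) as E2. cbn in E1, E2.
    cbn. rewrite E1, E2, H. reflexivity.
  - intros b. exists (G b), (eps b). apply (ni_iso Hs).
Qed.

Theorem theoremB (A B : MonCat) :
  monoidally_equivalent A B <->
  exists (C : MonCat) (P : MonFunData C A) (Q : MonFunData C B),
    is_strict_monoidal_functor P /\ is_surjective_equivalence P /\
    is_strict_monoidal_functor Q /\ is_surjective_equivalence Q.
Proof.
  split.
  - intros [F [G [HF [HG [He Hs]]]]].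
    destruct (equiv_props A B F G HG He Hs) as [Hfull [Hfaith Hes]].
    exact (fwd_concl HF Hfull Hfaith Hes).
  - intros [C [P [Q [H1 [H2 [H3 H4]]]]]]. exact (backward A B C P Q H1 H2 H3 H4).
Qed.
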